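(* Let $\mathcal{S}$ be a relational structure admitting an injective unary FA-presentation $(a^*,\phi)$, and let $R$ be a binary relation in the signature of $\mathcal{S}$. Let $R^+$ denote the transitive closure of $R$. Then $\Lambda(R^+,\phi)=\{(u,v)\in a^*\times a^* : (u\phi,v\phi)\in R^+\}$ is regular. Hence $\mathcal{S}$ augmented by the relation $R^+$ is also unary FA-presentable.
   Context: For words $w_1,\dots,w_r$ over a finite alphabet $A$, $\mathrm{conv}(w_1,\dots,w_r)$ is the word over $(A\cup\{\$\})^r$ (with $\$\notin A$) whose $j$-th letter is the tuple of $j$-th letters of the $w_i$, shorter words being padded at the end with $\$$. A relation $X\subseteq (A^* )^r$ is regular if $\{\mathrm{conv}(w_1,\dots,w_r):(w_1,\dots,w_r)\in X\}$ is a regular language. An FA-presentation of a relational structure $\mathcal{S}=(S,R_1,\dots,R_n)$ is a pair $(L,\phi)$ with $L$ a regular language over a finite alphabet and $\phi:L\to S$ surjective such that for every relation $R\in\{=,R_1,\dots,R_n\}$ of arity $r$ the relation $\Lambda(R,\phi)=\{(w_1,\dots,w_r)\in L^r : R(w_1\phi,\dots,w_r\phi)\}$ is regular. It is unary if $L$ is over a one-letter alphabet $\{a\}$; a structure is unary FA-presentable if it admits a unary FA-presentation. An injective unary FA-presentation $(a^*,\phi)$ is one with $L=a^*$ and $\phi$ injective. *)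

(* Defs.v *)
From Stdlib Require Import Relations List.
From mathcomp Require Import all_boot.
Set Implicit Arguments. Unset Strict Implicit. Unset Printing Implicit Defensive.

Definition regular_lang (Sigma : finType) (L : seq Sigma -> Prop) : Prop :=
  exists (Q : finType) (q0 : Q) (delta : Q -> Sigma -> Q) (F : pred Q),
    forall w, L w <-> F (foldl delta q0 w).

(* conv(w_1,...,w_r): letters are r-tuples over A ∪ {$}, with None = $. *)
Definition conv (A : finType) (r : nat) (ws : 'I_r -> seq A)
  : seq {ffun 'I_r -> option A} :=
  mkseq (fun j => [ffun i => onth (ws i) j]) (\max_(i < r) size (ws i)).

Definition regular_rel (A : finType) (r : nat) (X : ('I_r -> seq A) -> Prop) : Prop :=
  regular_lang (fun w => exists ws, X ws /\ w = conv ws).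

Definition sig_t (S : Type) := list {r : nat & ('I_r -> S) -> Prop}.

Definition of2 (S : Type) (x y : S) : 'I_2 -> S :=
  fun i => if val i == 0 then x else y.

Definition binrel (S : Type) (R : S -> S -> Prop) : ('I_2 -> S) -> Prop :=
  fun xs => R (xs ord0) (xs ord_max).

Definition Lambda (A : finType) (S : Type) (L : seq A -> Prop)
  (phi : {w : seq A | L w} -> S) (r : nat) (R : ('I_r -> S) -> Prop)
  : ('I_r -> seq A) -> Prop :=
  fun ws => exists h : (forall i, L (ws i)),
    R (fun i => phi (exist _ (ws i) (h i))).

Definition FA_presentation (S : Type) (sig : sig_t S) (A : finType)
  (L : seq A -> Prop) (phi : {w : seq A | L w} -> S) : Prop :=
  [/\ regular_lang L,
      (forall x : S, exists w, phi w = x),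
      regular_rel (Lambda phi (binrel (@eq S))) &
      (forall R, In R sig -> regular_rel (Lambda phi (projT2 R)))].

Definition unary_FA_presentable (S : Type) (sig : sig_t S) : Prop :=
  exists (L : seq unit -> Prop) (phi : {w : seq unit | L w} -> S),
    FA_presentation sig phi.

(* Main.v *)
Require Import Defs.
From Stdlib Require Import Relations List ClassicalEpsilon.
From mathcomp Require Import all_boot zify.
Set Implicit Arguments. Unset Strict Implicit. Unset Printing Implicit Defensive.

Definition Sig := {ffun 'I_2 -> option unit}.
Definition lt2 (p q : bool) : Sig :=
  [ffun i : 'I_2 => if val i == 0 then (if p then Some tt else None)
                    else (if q then Some tt else None)].
Definition SS := lt2 true true.
Definition SN := lt2 true false.
Definition NS := lt2 false true.

Definition cv (a b : nat) : seq Sig :=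
  nseq (minn a b) SS ++ nseq (a - b) SN ++ nseq (b - a) NS.

Lemma cv_le a b : a <= b -> cv a b = nseq a SS ++ nseq (b - a) NS.
Proof. move=> h; rewrite /cv (minn_idPl h). have ->: a - b = 0 by lia. by []. Qed.
Lemma cv_ge a b : b <= a -> cv a b = nseq b SS ++ nseq (a - b) SN.
Proof. move=> h; rewrite /cv (minn_idPr h). have ->: b - a = 0 by lia. by rewrite cats0. Qed.

Lemma cv_shift n a b : cv (n + a) (n + b) = nseq n SS ++ cv a b.
Proof.
rewrite /cv. have ->: minn (n+a) (n+b) = n + minn a b by lia.
have ->: n + a - (n + b) = a - b by lia. have ->: n + b - (n + a) = b - a by lia.
by rewrite nseqD -catA.
Qed.

Definition c1 (w : seq Sig) := count (fun l : Sig => l ord0 != None) w.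
Definition c2 (w : seq Sig) := count (fun l : Sig => l ord_max != None) w.

Lemma c1_cv a b : c1 (cv a b) = a.
Proof. rewrite /c1 /cv !count_cat !count_nseq /SS /SN /NS !ffunE /=. lia. Qed.
Lemma c2_cv a b : c2 (cv a b) = b.
Proof. rewrite /c2 /cv !count_cat !count_nseq /SS /SN /NS !ffunE /=. lia. Qed.

Lemma cv_inj a b a' b' : cv a b = cv a' b' -> a = a' /\ b = b'.
Proof. move=> h; split; [rewrite -(c1_cv a b) -(c1_cv a' b') h | rewrite -(c2_cv a b) -(c2_cv a' b') h]; by []. Qed.

Lemma cv_nth a b j : j < maxn a b -> nth SS (cv a b) j = lt2 (j < a) (j < b).
Proof.
move=> hj; case: (leqP a b) => hab.
- rewrite cv_le // nth_cat size_nseq; case: ifP => h.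
    by rewrite nth_nseq h /SS; congr lt2; lia.
  rewrite nth_nseq; case: ifP => h2; last lia.
  by rewrite /NS; congr lt2; lia.
- rewrite cv_ge ?(ltnW hab) // nth_cat size_nseq; case: ifP => h.
    by rewrite nth_nseq h /SS; congr lt2; lia.
  rewrite nth_nseq; case: ifP => h2; last lia.
  by rewrite /SN; congr lt2; lia.
Qed.

Lemma size_cv a b : size (cv a b) = maxn a b.
Proof. rewrite /cv !size_cat !size_nseq; lia. Qed.

Lemma seq_unit (l : seq unit) : l = nseq (size l) tt.
Proof. elim: l => [|[] l IH] //=; by rewrite -IH. Qed.

Lemma onth_nseq (k j : nat) : onth (nseq k tt) j = if j < k then Some tt else None.
Proof. elim: k j => [|k IH] [|j] //=. Qed.

Lemma conv_cv (ws : 'I_2 -> seq unit) :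
  conv ws = cv (size (ws ord0)) (size (ws ord_max)).
Proof.
rewrite /conv.
have ->: \max_(i < 2) size (ws i) = maxn (size (ws ord0)) (size (ws ord_max)).
  rewrite big_ord_recr /= big_ord_recr /= big_ord0 max0n.
  by congr (maxn (size (ws _)) _); apply: val_inj.
set a := size (ws ord0); set b := size (ws ord_max).
apply: (@eq_from_nth _ SS).
  by rewrite size_mkseq size_cv.
move=> j; rewrite size_mkseq => hj.
rewrite nth_mkseq // cv_nth //; apply/ffunP => i.
rewrite !ffunE.
have Hw : forall i, ws i = nseq (size (ws i)) tt by move=> k; apply: seq_unit.
rewrite (Hw i) onth_nseq.
have [i0|i1] : i = ord0 \/ i = ord_max.
  case: i => [[|[|k]] hk]; [left|right|by []]; by apply: val_inj.
- by subst i; rewrite -/a /=; case: ifP.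
- by subst i; rewrite -/b /=; case: ifP.
Qed.

Lemma SS_SN : (SS == SN) = false.
Proof. apply/eqP => /ffunP/(_ ord_max); rewrite !ffunE. by []. Qed.
Lemma SS_NS : (SS == NS) = false.
Proof. apply/eqP => /ffunP/(_ ord0); rewrite !ffunE. by []. Qed.
Lemma SN_NS : (SN == NS) = false.
Proof. apply/eqP => /ffunP/(_ ord0); rewrite !ffunE. by []. Qed.

Lemma SN_SS : (SN == SS) = false. Proof. by rewrite eq_sym SS_SN. Qed.
Lemma NS_SS : (NS == SS) = false. Proof. by rewrite eq_sym SS_NS. Qed.
Lemma NS_SN : (NS == SN) = false. Proof. by rewrite eq_sym SN_NS. Qed.

Definition Ph := option (option bool).
Definition step (p : Ph) (l : Sig) : Ph :=
  match p with
  | Some None => if l == SS then Some None else if l == SN then Some (Some true)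
                 else if l == NS then Some (Some false) else None
  | Some (Some true) => if l == SN then p else None
  | Some (Some false) => if l == NS then p else None
  | None => None
  end.
Definition ph (w : seq Sig) := foldl step (Some None) w.

Lemma run_None w : foldl step None w = None.
Proof. by elim: w. Qed.
Lemma run_SS k : foldl step (Some None) (nseq k SS) = Some None.
Proof. elim: k => //= k IH. by rewrite eqxx. Qed.
Lemma run_SN k : foldl step (Some (Some true)) (nseq k SN) = Some (Some true).
Proof. elim: k => //= k IH. by rewrite eqxx. Qed.
Lemma run_NS k : foldl step (Some (Some false)) (nseq k NS) = Some (Some false).
Proof. elim: k => //= k IH. by rewrite eqxx. Qed.

Lemma ph_cv a b : ph (cv a b) <> None.
Proof.
case: (leqP a b) => h.
- rewrite cv_le // /ph foldl_cat run_SS.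
  case: (b - a) => [|k'] //=. by rewrite NS_SS NS_SN eqxx run_NS.
- rewrite cv_ge ?(ltnW h) // /ph foldl_cat run_SS.
  case: (a - b) => [|k'] //=. by rewrite SN_SS eqxx run_SN.
Qed.

Lemma nseq_rcons (T : Type) n (x : T) : rcons (nseq n x) x = nseq n.+1 x.
Proof. by rewrite -cats1 -addn1 nseqD. Qed.

Lemma ph_forms w :
  (ph w = Some None -> w = nseq (size w) SS) /\
  (ph w = Some (Some true) -> exists i j, w = nseq i SS ++ nseq j.+1 SN) /\
  (ph w = Some (Some false) -> exists i j, w = nseq i SS ++ nseq j.+1 NS).
Proof.
elim/last_ind: w => [|w l [IH0 [IH1 IH2]]]; first by split => //; split => //.
rewrite /ph foldl_rcons -/(ph w).
case E: (ph w) => [[[]|]|] /=.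
- move: (IH1 E) => [i [j ->]].
  case: eqP => [->|_]; last by [].
  split => //; split => // _.
  by exists i, j.+1; rewrite rcons_cat nseq_rcons.
- move: (IH2 E) => [i [j ->]].
  case: eqP => [->|_]; last by [].
  split => //; split => // _.
  by exists i, j.+1; rewrite rcons_cat nseq_rcons.
- move: (IH0 E) => ->.
  case: eqP => [->|_].
    split; [move=> _; by rewrite size_rcons (size_nseq (size w) SS) nseq_rcons|].
    split; intro H; discriminate H.
  case: eqP => [->|_].
    split; first (intro H; discriminate H).
    split; last (intro H; discriminate H).
    move=> _; exists (size w), 0. by rewrite cats1.
  case: eqP => [->|_] //.
  split; first (intro H; discriminate H).
  split; first (intro H; discriminate H).
  move=> _; exists (size w), 0. by rewrite cats1.
- by [].
Qed.

Lemma runSN_inv v : foldl step (Some (Some true)) v <> None -> v = nseq (size v) SN.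
Proof.
elim: v => //= l v IH; case: eqP => [->|_]; last by rewrite run_None.
by move=> /IH {1}->.
Qed.
Lemma runNS_inv v : foldl step (Some (Some false)) v <> None -> v = nseq (size v) NS.
Proof.
elim: v => //= l v IH; case: eqP => [->|_]; last by rewrite run_None.
by move=> /IH {1}->.
Qed.

Lemma ph_cvP w : ph w <> None -> exists a b, w = cv a b.
Proof.
have [H0 [H1 H2]] := ph_forms w.
case E: (ph w) => [[[]|]|] // _.
- have [i [j ->]] := H1 E. exists (i + j.+1), i. rewrite cv_ge; last lia.
  by have ->: i + j.+1 - i = j.+1 by lia.
- have [i [j ->]] := H2 E. exists i, (i + j.+1). rewrite cv_le; last lia.
  by have ->: i + j.+1 - i = j.+1 by lia.
- rewrite (H0 E). exists (size w), (size w). by rewrite cv_le // subnn cats0.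
Qed.

Lemma ph_c1 u v : foldl step (ph u) v <> None ->
  (ph u <> Some (Some false) -> c1 u = size u) /\
  (ph u = Some (Some false) -> c1 u < size u /\ c1 v = 0).
Proof.
have [H0 [H1 H2]] := ph_forms u.
case E: (ph u) => [[[]|]|] //.
- move=> _; split => // _. have [i [j ->]] := H1 E.
  rewrite /c1 count_cat !count_nseq size_cat !size_nseq /SS /SN !ffunE /=. lia.
- move=> /runNS_inv ->; split => // _. have [i [j ->]] := H2 E.
  rewrite /c1 !count_cat !count_nseq size_cat !size_nseq /SS /NS !ffunE /=. lia.
- move=> _; split => // _. rewrite {1}(H0 E) /c1 count_nseq /SS ffunE /=. lia.
- by rewrite run_None.
Qed.

Lemma ph_c2 u v : foldl step (ph u) v <> None ->
  (ph u <> Some (Some true) -> c2 u = size u) /\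
  (ph u = Some (Some true) -> c2 u < size u /\ c2 v = 0).
Proof.
have [H0 [H1 H2]] := ph_forms u.
case E: (ph u) => [[[]|]|] //.
- move=> /runSN_inv ->; split => // _. have [i [j ->]] := H1 E.
  rewrite /c2 !count_cat !count_nseq size_cat !size_nseq /SS /SN !ffunE /=. lia.
- move=> _; split => // _. have [i [j ->]] := H2 E.
  rewrite /c2 count_cat !count_nseq size_cat !size_nseq /SS /NS !ffunE /=. lia.
- move=> _; split => // _. rewrite {1}(H0 E) /c2 count_nseq /SS ffunE /=. lia.
- by rewrite run_None.
Qed.

Unset Implicit Arguments.
Notation ct := (clos_trans nat).
Notation crt := (clos_refl_trans nat).
Record dfa := Dfa { dQ : finType; dq0 : dQ; dd : dQ -> Sig -> dQ; dF : pred dQ }.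

Definition run (D : dfa) (s : dQ D) w := foldl (dd D) s w.
Definition E (D : dfa) a b : bool := dF D (run D (dq0 D) (cv a b)).
Definition sst (D : dfa) k := run D (dq0 D) (nseq k SS).
Definition tokout (D : dfa) n u := run D (sst D u) (nseq (n - u) NS).
Definition tokin (D : dfa) n v := run D (sst D v) (nseq (n - v) SN).
Definition Es (D : dfa) s a b : bool := dF D (run D s (cv a b)).
Definition Ep (D : dfa) n a b : Prop := a < n /\ b < n /\ E D a b.

Lemma tokout_ok D n u v : u < n -> n <= v ->
  E D u v = dF D (run D (tokout D n u) (nseq (v - n) NS)).
Proof.
move=> h1 h2; rewrite /E cv_le; last lia.
have ->: v - u = (n - u) + (v - n) by lia.
by rewrite nseqD /run !foldl_cat.
Qed.

Lemma tokin_ok D n u v : v < n -> n <= u ->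
  E D u v = dF D (run D (tokin D n v) (nseq (u - n) SN)).
Proof.
move=> h1 h2; rewrite /E cv_ge; last lia.
have ->: u - v = (n - v) + (u - n) by lia.
by rewrite nseqD /run !foldl_cat.
Qed.

Lemma shift_ok D n a b : E D (n + a) (n + b) = Es D (sst D n) a b.
Proof. by rewrite /E /Es cv_shift /run foldl_cat. Qed.

Definition Node (D : dfa) := (bool * option (dQ D))%type.

Definition PT (D : dfa) n x y (a b : Node D) : Prop :=
  match a, b with
  | (false, None), (true, None) => x < n /\ y < n /\ ct (Ep D n) x y
  | (false, None), (true, Some t) =>
      x < n /\ exists u, u < n /\ crt (Ep D n) x u /\ tokout D n u = t
  | (false, Some t), (true, None) =>
      y < n /\ exists v, v < n /\ tokin D n v = t /\ crt (Ep D n) v y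
  | (false, Some t), (true, Some t') =>
      exists v u, v < n /\ u < n /\ tokin D n v = t /\ crt (Ep D n) v u
                  /\ tokout D n u = t'
  | _, _ => False
  end.

Definition ST (D : dfa) s (xo yo : option nat) (a b : Node D) : Prop :=
  match a, b with
  | (false, None), (true, None) =>
      exists p q, xo = Some p /\ yo = Some q /\ ct (Es D s) p q
  | (false, None), (false, Some t) =>
      exists p, xo = Some p /\ exists u, crt (Es D s) p u /\
                                   dF D (run D t (nseq u SN))
  | (true, Some t), (true, None) =>
      exists q, yo = Some q /\ exists v, dF D (run D t (nseq v NS)) /\
                                   crt (Es D s) v q
  | (true, Some t), (false, Some t') =>
      exists v u, dF D (run D t (nseq v NS)) /\ crt (Es D s) v u /\
                  dF D (run D t' (nseq u SN))
  | _, _ => False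
  end.

Definition xo n x := if n <= x then Some (x - n) else None.

Definition Gl (D : dfa) n x y (a b : Node D) : Prop :=
  PT D n x y a b \/ ST D (sst D n) (xo n x) (xo n y) a b.

Definition ER (D : dfa) a b : Prop := E D a b.

Lemma ct_crt {A : Type} {R : relation A} a b c :
  clos_trans A R a b -> clos_refl_trans A R b c -> clos_trans A R a c.
Proof.
move=> h1 h2; elim: h2 a h1 => [u v r|u|u v w _ IH1 _ IH2] a h; last by apply: IH2; apply: IH1.
- exact: t_trans h (t_step _ _ _ _ r).
- exact: h.
Qed.

Lemma crt_step_crt {A : Type} {R : relation A} a b c d :
  clos_refl_trans A R a b -> R b c -> clos_refl_trans A R c d -> clos_trans A R a d.
Proof. move=> h1 h2 h3; apply: ct_crt _ h3; apply: clos_rt_t h1 (t_step _ _ _ _ h2). Qed.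

Lemma ct_rt {A : Type} {R : relation A} a b : clos_trans A R a b -> clos_refl_trans A R a b.
Proof. elim => [u v r|u v w _ IH1 _ IH2]; [exact: rt_step | exact: rt_trans IH1 IH2]. Qed.

Lemma ct_mono {A B : Type} {R : relation A} {R' : relation B} {f : A -> B} :
  (forall a b, R a b -> R' (f a) (f b)) ->
  forall a b, clos_trans A R a b -> clos_trans B R' (f a) (f b).
Proof. move=> H a b; elim => [u v r|u v w _ IH1 _ IH2]; [apply: t_step; exact: H | exact: t_trans IH1 IH2]. Qed.

Lemma crt_mono {A B : Type} {R : relation A} {R' : relation B} {f : A -> B} :
  (forall a b, R a b -> R' (f a) (f b)) ->
  forall a b, clos_refl_trans A R a b -> clos_refl_trans B R' (f a) (f b).
Proof. move=> H a b; elim => [u v r|u|u v w _ IH1 _ IH2]; [apply: rt_step; exact: H | exact: rt_refl | exact: rt_trans IH1 IH2]. Qed.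

Lemma xoP n y q : xo n y = Some q -> n <= y /\ y = n + q.
Proof. rewrite /xo; case: ifP => // h [<-]; split => //; lia. Qed.

Lemma Es_ER D n p q : Es D (sst D n) p q -> ER D (n + p) (n + q).
Proof. by rewrite /ER shift_ok. Qed.
Lemma Ep_ER D n p q : Ep D n p q -> ER D p q.
Proof. by move=> [_ [_ h]]. Qed.

Definition Inv (D : dfa) n x y (a : Node D) : Prop :=
  match a with
  | (false, None) => True
  | (true, None) => ct (ER D) x y
  | (true, Some t) => exists u, u < n /\ crt (ER D) x u /\ tokout D n u = t
  | (false, Some t) => exists u, n <= u /\ crt (ER D) x u /\ dF D (run D t (nseq (u - n) SN))
  end.

Lemma Inv_step D n x y (a b : Node D) : Gl D n x y a b -> Inv D n x y a -> Inv D n x y b.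
Proof.
have EsR := @crt_mono _ _ _ _ (fun k => n + k) (fun a b => Es_ER D n a b).
have EsRt := @ct_mono _ _ _ _ (fun k => n + k) (fun a b => Es_ER D n a b).
have EpR := @crt_mono _ _ _ _ id (fun a b => Ep_ER D n a b).
have EpRt := @ct_mono _ _ _ _ id (fun a b => Ep_ER D n a b).
move: a b => [[] [t|]] [[] [t'|]] [H|H] Ia //=; simpl in H.
- (* Out -> End via ST *)
  move: H Ia => [q [/xoP [hy ->] [v [h1 h2]]]] [u0 [hu0 [h4 h5]]].
  apply: crt_step_crt h4 _ (EsR _ _ h2).
  rewrite /ER (tokout_ok D n u0 (n + v)) //; last lia.
  have ->: n + v - n = v by lia. by rewrite h5.
- (* Out -> In via ST *)
  move: H Ia => [v [u [h1 [h2 h3]]]] [u0 [hu0 [h4 h5]]].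
  exists (n + u); split; first lia; split; last by have ->: n + u - n = u by lia.
  apply: ct_rt; apply: crt_step_crt h4 _ (EsR _ _ h2).
  rewrite /ER (tokout_ok D n u0 (n + v)) //; last lia.
  have ->: n + v - n = v by lia. by rewrite h5.
- (* In -> Out via PT *)
  move: H Ia => [v [u [hv [hu [h1 [h2 h3]]]]]] [u0 [hu0 [h4 h5]]].
  exists u; split => //; split => //.
  apply: ct_rt; apply: crt_step_crt h4 _ (EpR _ _ h2).
  by rewrite /ER (tokin_ok D n u0 v) // h1.
- (* In -> End via PT *)
  move: H Ia => [hy [v [hv [h1 h2]]]] [u0 [hu0 [h4 h5]]].
  apply: crt_step_crt h4 _ (EpR _ _ h2).
  by rewrite /ER (tokin_ok D n u0 v) // h1.
- (* Start -> Out via PT *)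
  move: H => [hx [u [hu [h1 h2]]]].
  exists u; split => //; split => //. exact: EpR h1.
- (* Start -> End via PT *)
  move: H => [hx [hy h]]. exact: EpRt h.
- (* Start -> End via ST *)
  move: H => [p [q [/xoP [hx ->] [/xoP [hy ->] h]]]]. exact: EsRt h.
- (* Start -> In via ST *)
  move: H => [p [/xoP [hx ->] [u [h1 h2]]]].
  exists (n + u); split; first lia; split; last by have ->: n + u - n = u by lia.
  exact: EsR h1.
Qed.

Lemma xo_ge n x : n <= x -> xo n x = Some (x - n).
Proof. by move=> h; rewrite /xo h. Qed.

Lemma ER_Es D n w w' : n <= w -> n <= w' -> ER D w w' -> Es D (sst D n) (w - n) (w' - n).
Proof.
move=> h1 h2; rewrite /ER -shift_ok.
have ->: n + (w - n) = w by lia. by have ->: n + (w' - n) = w' by lia.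
Qed.

Definition PW (D : dfa) n x (a : Node D) w : Prop :=
  match a with
  | (false, None) => x < n /\ ct (Ep D n) x w
  | (false, Some t) => exists v, v < n /\ tokin D n v = t /\ crt (Ep D n) v w
  | _ => False
  end.
Definition SW (D : dfa) n x (a : Node D) w : Prop :=
  match a with
  | (false, None) => n <= x /\ ct (Es D (sst D n)) (x - n) (w - n)
  | (true, Some t) => exists v, dF D (run D t (nseq v NS)) /\ crt (Es D (sst D n)) v (w - n)
  | _ => False
  end.
Definition Claim (D : dfa) n x y w : Prop :=
  (w < n /\ exists a, clos_refl_trans (Node D) (Gl D n x y) (false, None) a /\ PW D n x a w) \/
  (n <= w /\ exists a, clos_refl_trans (Node D) (Gl D n x y) (false, None) a /\ SW D n x a w).

Lemma Claim_step D n x y w w' : Claim D n x y w -> ER D w w' -> Claim D n x y w'.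
Proof.
move=> [[hw [a [Ha Pa]]]|[hw [a [Ha Sa]]]] He; case: (ltnP w' n) => hw'.
- left; split => //; exists a; split => //.
  move: a Pa {Ha} => [[] [t|]] //=.
  + move=> [v [hv [h1 h2]]]; exists v; split => //; split => //.
    apply: rt_trans h2 (rt_step _ _ _ _ _); by split.
  + move=> [hx h]; split => //; apply: t_trans h (t_step _ _ _ _ _); by split.
- right; split => //; exists (true, Some (tokout D n w)); split.
    apply: rt_trans Ha (rt_step _ _ _ _ _); left.
    move: a Pa => [[] [t|]] //=.
    + move=> [v [hv [h1 h2]]]; by exists v, w.
    + move=> [hx h]; split => //; exists w; split => //; split => //; exact: ct_rt.
  exists (w' - n); split; last exact: rt_refl.
  by rewrite -(tokout_ok D n w w').
- left; split => //; exists (false, Some (tokin D n w')); split.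
    apply: rt_trans Ha (rt_step _ _ _ _ _); right.
    move: a Sa => [[] [t|]] //=.
    + move=> [v [h1 h2]]; exists v, (w - n); split => //; split => //.
      by rewrite -(tokin_ok D n w w').
    + move=> [hx h]; exists (x - n); split; first exact: xo_ge.
      exists (w - n); split; first exact: ct_rt.
      by rewrite -(tokin_ok D n w w').
  exists w'; split => //; split => //; exact: rt_refl.
- right; split => //; exists a; split => //.
  have Hs := ER_Es D n w w' hw hw' He.
  move: a Sa {Ha} => [[] [t|]] //=.
  + move=> [v [h1 h2]]; exists v; split => //. apply: rt_trans h2 (rt_step _ _ _ _ Hs).
  + move=> [hx h]; split => //; apply: t_trans h (t_step _ _ _ _ Hs).
Qed.

Lemma Claim_base D n x y w : ER D x w -> Claim D n x y w.
Proof.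
move=> He; case: (ltnP x n) => hx; case: (ltnP w n) => hw.
- left; split => //; exists (false, None); split; first exact: rt_refl.
  split => //; apply: t_step; by split.
- right; split => //; exists (true, Some (tokout D n x)); split.
    apply: rt_step; left; split => //; exists x; split => //; split => //; exact: rt_refl.
  exists (w - n); split; last exact: rt_refl.
  by rewrite -(tokout_ok D n x w).
- left; split => //; exists (false, Some (tokin D n w)); split.
    apply: rt_step; right; exists (x - n); split; first exact: xo_ge.
    exists (x - n); split; first exact: rt_refl.
    by rewrite -(tokin_ok D n x w).
  exists w; split => //; split => //; exact: rt_refl.
- right; split => //; exists (false, None); split; first exact: rt_refl.
  split => //; apply: t_step; exact: ER_Es.
Qed.

Lemma Claim_end D n x y : Claim D n x y y ->
  clos_trans (Node D) (Gl D n x y) (false, None) (true, None).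
Proof.
move=> [[hy [a [Ha Pa]]]|[hy [a [Ha Sa]]]]; apply: clos_rt_t Ha (t_step _ _ _ _ _).
- left; move: a Pa => [[] [t|]] //=.
  by move=> [hx h]; repeat split.
- right; move: a Sa => [[] [t|]] //=.
  all: first [ by move=> [v [h1 h2]]; exists (y - n); split; [exact: xo_ge | exists v]
             | by move=> [hx h]; exists (x - n), (y - n); split; [exact: xo_ge | split => //; exact: xo_ge] ].
Qed.

Theorem glue D n x y :
  ct (ER D) x y <-> clos_trans (Node D) (Gl D n x y) (false, None) (true, None).
Proof.
split.
- move=> h; apply: Claim_end.
  have HC : forall w, clos_trans_n1 nat (ER D) x w -> Claim D n x y w.
    move=> w; elim => [u hu|u z hu _ IH]; [exact: Claim_base | exact: (Claim_step D n x y u z IH hu)].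
  exact: HC (clos_trans_tn1 _ _ _ _ h).
- move=> h.
  have H : forall a b, clos_trans (Node D) (Gl D n x y) a b -> Inv D n x y a -> Inv D n x y b.
    move=> a b; elim => [u v r|u v w _ IH1 _ IH2]; [exact: Inv_step | by move=> /IH1/IH2].
  exact: (H _ _ h I).
Qed.

Definition pb (P : Prop) : bool := if excluded_middle_informative P then true else false.
Lemma pbP (P : Prop) : pb P <-> P.
Proof. rewrite /pb; case: excluded_middle_informative => //. Qed.

Lemma nerode (Sigma X : finType) (L : seq Sigma -> Prop) (g : seq Sigma -> X) :
  (forall u u' v, g u = g u' -> L (u ++ v) -> L (u' ++ v)) -> regular_lang L.
Proof.
move=> Hg.
pose rep (x : X) : seq Sigma :=
  match excluded_middle_informative (exists u, g u = x) with
  | left H => proj1_sig (constructive_indefinite_description _ H)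
  | right _ => [::]
  end.
have Hrep : forall u, g (rep (g u)) = g u.
  move=> u; rewrite /rep; case: excluded_middle_informative => [H|H]; last by case: H; exists u.
  by case: constructive_indefinite_description.
pose d (x : X) (l : Sigma) := g (rep x ++ [:: l]).
exists X, (g [::]), d, (fun x => pb (L (rep x))).
have Inv : forall w, exists u, foldl d (g [::]) w = g u /\ forall v, L (u ++ v) <-> L (w ++ v).
  elim/last_ind => [|w l [u [Hu Hv]]]; first by exists [::].
  exists (rep (g u) ++ [:: l]); rewrite foldl_rcons Hu; split => // v.
  rewrite -catA /=; split.
  - move=> H; have := Hg _ _ ((l :: v)) (Hrep u) H. by rewrite Hv -cats1 -catA.
  - move=> H; apply: (Hg u _ (l :: v) (esym (Hrep u))). by rewrite Hv -cats1 -catA in H *.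
move=> w; have [u [Hu Hv]] := Inv w.
rewrite Hu pbP; have := Hv [::]; rewrite !cats0 => Hw.
split.
- move=> H0; have H := proj2 Hw H0. have := Hg u _ [::] (esym (Hrep u)). rewrite !cats0; exact.
- move=> H; apply Hw. have := Hg _ u [::] (Hrep u). rewrite !cats0; exact.
Qed.

Lemma PT_congr D n x y x' y' (a b : Node D) :
  (x = x' \/ (n <= x /\ n <= x')) -> (y = y' \/ (n <= y /\ n <= y')) ->
  (PT D n x y a b <-> PT D n x' y' a b).
Proof.
move=> hx hy.
case: hx => [<-|[hx1 hx2]]; case: hy => [<-|[hy1 hy2]];
  move: a b => [[] [t|]] [[] [t'|]] /=; try tauto.
all: try (have nx : ~ (x < n) by lia); try (have nx' : ~ (x' < n) by lia).
all: try (have ny : ~ (y < n) by lia); try (have ny' : ~ (y' < n) by lia).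
all: tauto.
Qed.

Lemma ct_ext {A : Type} (R R' : relation A) a b :
  (forall a b, R a b <-> R' a b) -> clos_trans A R a b -> clos_trans A R' a b.
Proof. move=> H; elim => [u v r|u v w _ IH1 _ IH2]; [apply: t_step; exact/H | exact: t_trans IH1 IH2]. Qed.

Theorem main_reg D :
  regular_lang (fun w : seq Sig => exists a b, w = cv a b /\ ct (ER D) a b).
Proof.
pose g (u : seq Sig) : (Ph * dQ D * {set (bool * option (dQ D)) * (bool * option (dQ D))})%type :=
  (ph u, sst D (size u), [set e | pb (PT D (size u) (c1 u) (c2 u) e.1 e.2)]).
apply: (nerode _ _ _ g).
move=> u u' v [Eph Es Eset] [a [b [Huv Hab]]].
have hv : foldl step (ph u) v <> None by rewrite /ph -foldl_cat Huv; apply: ph_cv.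
have hv' : foldl step (ph u') v <> None by rewrite -Eph.
have [a' [b' Huv']] : exists a' b', u' ++ v = cv a' b'.
  apply: ph_cvP; by rewrite /ph foldl_cat.
have Ea : a = c1 u + c1 v by rewrite -(c1_cv a b) -Huv /c1 count_cat.
have Eb : b = c2 u + c2 v by rewrite -(c2_cv a b) -Huv /c2 count_cat.
have Ea' : a' = c1 u' + c1 v by rewrite -(c1_cv a' b') -Huv' /c1 count_cat.
have Eb' : b' = c2 u' + c2 v by rewrite -(c2_cv a' b') -Huv' /c2 count_cat.
have [H1a H1b] := ph_c1 hv. have [H1a' H1b'] := ph_c1 hv'.
have [H2a H2b] := ph_c2 hv. have [H2a' H2b'] := ph_c2 hv'.
pose n := @size Sig u; pose n' := @size Sig u'.
have Cx : (a = c1 u \/ (n <= a /\ n <= c1 u)) /\ (a' = c1 u' \/ (n' <= a' /\ n' <= c1 u'))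
          /\ xo n a = xo n' a'.
  rewrite /n /n'; case: (ph u =P Some (Some false)) => E.
  - have [h1 h2] := H1b E. rewrite Eph in E. have [h1' h2'] := H1b' E.
    rewrite /xo; split; first by left; lia. split; first by left; lia.
    rewrite ifF; last lia. rewrite ifF //; lia.
  - have h1 := H1a E. rewrite Eph in E. have h1' := H1a' E.
    rewrite /xo; split; first by right; split; lia. split; first by right; split; lia.
    rewrite ifT; last (lia). rewrite ifT; last (lia).
    congr Some; lia.
have Cy : (b = c2 u \/ (n <= b /\ n <= c2 u)) /\ (b' = c2 u' \/ (n' <= b' /\ n' <= c2 u'))
          /\ xo n b = xo n' b'.
  rewrite /n /n'; case: (ph u =P Some (Some true)) => E.
  - have [h1 h2] := H2b E. rewrite Eph in E. have [h1' h2'] := H2b' E.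
    rewrite /xo; split; first by left; lia. split; first by left; lia.
    rewrite ifF; last lia. rewrite ifF //; lia.
  - have h1 := H2a E. rewrite Eph in E. have h1' := H2a' E.
    rewrite /xo; split; first by right; split; lia. split; first by right; split; lia.
    rewrite ifT; last (lia). rewrite ifT; last (lia).
    congr Some; lia.
move: Cx Cy => [Cx1 [Cx2 Cx3]] [Cy1 [Cy2 Cy3]].
exists a', b'; split => //.
apply/(glue D n').
move: Hab => /(glue D n) Hab.
apply: ct_ext Hab => e1 e2; rewrite /Gl Es Cx3 Cy3.
suff -> : PT D n a b e1 e2 <-> PT D n' a' b' e1 e2 by [].
rewrite (PT_congr D n a b (c1 u) (c2 u) e1 e2 Cx1 Cy1).
rewrite (PT_congr D n' a' b' (c1 u') (c2 u') e1 e2 Cx2 Cy2).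
move: Eset => /setP /(_ (e1, e2)); rewrite !inE /= => HS.
split => H.
- apply/pbP; rewrite -HS; exact/pbP.
- apply/pbP; rewrite HS; exact/pbP.
Qed.

From Stdlib Require Import FunctionalExtensionality.

Lemma reg_ext (Sigma : finType) (L L' : seq Sigma -> Prop) :
  (forall w, L w <-> L' w) -> regular_lang L' -> regular_lang L.
Proof.
move=> H [Q [q0 [d [F HF]]]]; exists Q, q0, d, F => w.
split => h; [apply/HF/H | apply/H/HF]; exact: h.
Qed.

Theorem theorem4p6 (S : Type) (sig : sig_t S)
  (phi : {w : seq unit | True} -> S)
  (Hpres : FA_presentation sig phi) (Hinj : injective phi)
  (R : ('I_2 -> S) -> Prop) (HR : In (existT _ 2 R) sig) :
  let Rplus := binrel (clos_trans S (fun x y => R (of2 x y))) in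
  regular_rel (Lambda phi Rplus) /\
  unary_FA_presentable (sig ++ (existT _ 2 Rplus :: nil)).
Proof.
move=> Rplus.
case: Hpres => HL Hsurj Heq Hrels.
pose Phi (k : nat) : S := phi (exist _ (nseq k tt) I).
have HPhi : forall l (p : True), phi (exist _ l p) = Phi (size l).
  move=> l p; case: p; rewrite /Phi. by rewrite {1}(seq_unit l).
have Lam : forall (Rr : ('I_2 -> S) -> Prop) ws,
    Lambda phi Rr ws <-> Rr (of2 (Phi (size (ws ord0))) (Phi (size (ws ord_max)))).
  move=> Rr ws.
  have Hf : forall h : (forall i, True),
      (fun i => phi (exist (fun _ => True) (ws i) (h i))) =
      of2 (Phi (size (ws ord0))) (Phi (size (ws ord_max))).
    move=> h; apply: functional_extensionality => i; rewrite HPhi /of2.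
    case: i => [[|[|k]] hk] //=.
    + by have -> : Ordinal hk = ord0 by apply: val_inj.
    + by have -> : Ordinal hk = ord_max by apply: val_inj.
  split; [move=> [h H]; by rewrite -(Hf h) | move=> H; exists (fun _ => I); by rewrite Hf].
pose RS := fun x y => R (of2 x y).
pose Rn := fun a b => RS (Phi a) (Phi b).
have Phi_surj : forall s, exists k, Phi k = s.
  move=> s; have [[l p] <-] := Hsurj s; exists (size l); by rewrite HPhi.
have Phi_inj : forall a b, Phi a = Phi b -> a = b.
  move=> a b H; have := congr1 (fun w : {w : seq unit | True} => size (proj1_sig w)) (Hinj _ _ H).
  by rewrite /= !size_nseq.
have ctS : forall a b, clos_trans S RS (Phi a) (Phi b) <-> ct Rn a b.
  move=> a b; split; last by apply: (@ct_mono _ _ Rn RS Phi).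
  have H : forall X Y, clos_trans S RS X Y -> forall a b, X = Phi a -> Y = Phi b -> ct Rn a b.
    move=> X Y; elim => [u v r|u v w _ IH1 _ IH2] a0 b0 Hu Hv.
    - apply: t_step; rewrite /Rn -Hu -Hv; exact: r.
    - have [c Hc] := Phi_surj v. exact: t_trans (IH1 _ _ Hu (esym Hc)) (IH2 _ _ (esym Hc) Hv).
  move=> h; exact: (H _ _ h a b erefl erefl).
have HRr := Hrels _ HR; simpl in HRr.
move: HRr => [Q [q0 [d [F HD]]]].
pose D := Dfa Q q0 d F.
have HE : forall a b, ER D a b <-> Rn a b.
  move=> a b; rewrite /ER /E /run /=; split.
  - move=> /HD [ws [Hws Hc]]. rewrite conv_cv in Hc.
    have [-> ->] := cv_inj Hc. exact/(Lam R ws).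
  - move=> H; apply/HD.
    exists (fun i : 'I_2 => if val i == 0 then nseq a tt else nseq b tt); split.
      by apply/(Lam R); rewrite /= !size_nseq.
    by rewrite conv_cv /= !size_nseq.
have Part1 : regular_rel (Lambda phi Rplus).
  rewrite /regular_rel.
  apply: (reg_ext _ _ (fun w => exists a b, w = cv a b /\ ct (ER D) a b)); last exact: main_reg.
  move=> w; split.
  - move=> [ws [Hws ->]]; exists (size (ws ord0)), (size (ws ord_max)); split; first exact: conv_cv.
    move: Hws => /(Lam Rplus); rewrite /Rplus /binrel /of2 /= => /ctS.
    apply: ct_ext => x y; split; move/HE; exact.
  - move=> [a [b [-> Hab]]].
    exists (fun i : 'I_2 => if val i == 0 then nseq a tt else nseq b tt); split.
      apply/(Lam Rplus); rewrite /Rplus /binrel /of2 /= !size_nseq; apply/ctS.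
      apply: ct_ext Hab => x y; split; move/HE; exact.
    by rewrite conv_cv /= !size_nseq.
split => //.
exists (fun _ => True), phi; split => //.
move=> R0 H0; case: (in_app_or _ _ _ H0) => H; first exact: Hrels.
case: H => [<-|[]] //.
Qed.
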